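(* Let $\nu\in\mathcal P_2(\mathbb R^d)$ and $\mathcal D\subset\mathcal P_2(\mathbb R^d)$. Consider the relaxed problem $$(\mathrm{R})\qquad \min_{\mu\in\mathcal D}\mathcal W_2^2(\mu,\nu)$$ and the self-consistent problem $$(\mathrm{S})\qquad \inf_{\mu\in\mathcal D}\ \inf_{\pi\in\mathcal M(\mu,\nu)}\int|x-y|^2\,d\pi(x,y).$$ Assume there exist a minimizer $\mu\in\mathcal D$ of $(\mathrm R)$ and an optimal coupling $\pi\in\Pi(\mu,\nu)$ for $\mathcal W_2^2(\mu,\nu)$ such that $(c_\pi)_\#\mu\in\mathcal D$. Then $(c_\pi)_\#\mu$ is optimal both for $(\mathrm R)$ and for $(\mathrm S)$ (in $(\mathrm S)$ together with the coupling $(\mathsf C_\pi)_\#\pi\in\mathcal M((c_\pi)_\#\mu,\nu)$), and the optimal values of $(\mathrm R)$ and $(\mathrm S)$ coincide.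
   Context: $\mathcal P_2(\mathbb R^d)$ is the set of Borel probability measures on $\mathbb R^d$ with finite second moment. $\Pi(\mu,\nu)$ is the set of couplings of $\mu,\nu$ and $\mathcal W_2^2(\mu,\nu)=\inf_{\pi\in\Pi(\mu,\nu)}\int|x-y|^2d\pi$. $\mathcal M(\mu,\nu)$ is the set of martingale couplings: laws $\pi=\mathcal L(X,Y)$ with $X\sim\mu$, $Y\sim\nu$ and $\mathbb E_\pi[Y\mid X]=X$. For $\pi\in\Pi(\mu,\nu)$ with disintegration $\pi=\mu\otimes\pi_x$ (i.e. $\pi(A\times B)=\int_A\pi_x(B)\,d\mu(x)$), the $\pi$-conditional barycentric map is $c_\pi(x)=\int y\,d\pi_x(y)$ ($\mu$-a.e.), and $\mathsf C_\pi(x,y)=(c_\pi(x),y)$. *)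

(* Defs.v *)
(* R^d is modelled as [d.-tuple R] with its canonical
   product sigma-algebra (= Borel sigma-algebra of R^d). *)
From HB Require Import structures.
From mathcomp Require Import all_boot all_order all_algebra.
From mathcomp Require Import all_classical all_reals all_analysis.
Set Implicit Arguments.
Unset Strict Implicit.
Unset Printing Implicit Defensive.
Import Order.TTheory GRing.Theory Num.Theory.
Local Open Scope classical_set_scope.
Local Open Scope ring_scope.

Section OT.
Variables (R : realType) (d : nat).
Local Notation Rd := (d.-tuple R).

Definition sqdist (x y : Rd) : R := \sum_(i < d) (tnth x i - tnth y i) ^+ 2.
Definition sqnorm (x : Rd) : R := \sum_(i < d) (tnth x i) ^+ 2.

Definition P2 (mu : probability Rd R) : Prop :=
  (\int[mu]_x (sqnorm x)%:E < +oo)%E.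

Definition is_coupling (mu nu : probability Rd R)
  (pi : probability (Rd * Rd)%type R) : Prop :=
  forall A : set Rd, measurable A ->
    pushforward pi fst A = mu A /\ pushforward pi snd A = nu A.

Definition cost (pi : probability (Rd * Rd)%type R) : \bar R :=
  (\int[pi]_z (sqdist z.1 z.2)%:E)%E.

Definition W2sq (mu nu : probability Rd R) : \bar R :=
  ereal_inf [set cost pi | pi in [set pi | is_coupling mu nu pi]].

(* M(mu, nu): couplings with E_pi[Y | X] = X, i.e. (componentwise)
   Y integrable and int_{A x R^d} y_i dpi = int_{A x R^d} x_i dpi
   for every Borel A. *)
Definition is_martingale_coupling (mu nu : probability Rd R)
  (pi : probability (Rd * Rd)%type R) : Prop :=
  is_coupling mu nu pi /\
  forall i : 'I_d,
    pi.-integrable setT (fun z : Rd * Rd => (tnth z.2 i)%:E) /\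
    forall A : set Rd, measurable A ->
      (\int[pi]_(z in A `*` setT) (tnth z.2 i)%:E =
       \int[pi]_(z in A `*` setT) (tnth z.1 i)%:E)%E.

(* pi = mu (x) pi_x : disintegration of pi w.r.t. its first marginal
   by a probability kernel k (x |-> pi_x) *)
Definition disintegrates (mu : probability Rd R)
  (pi : probability (Rd * Rd)%type R) (k : R.-pker Rd ~> Rd) : Prop :=
  forall A B : set Rd, measurable A -> measurable B ->
    pi (A `*` B) = (\int[mu]_(x in A) k x B)%E.

Definition bary (k : R.-pker Rd ~> Rd) (x : Rd) : Rd :=
  [tuple Rintegral (k x) setT (fun y : Rd => tnth y i) | i < d].

Definition value_R (D : set (probability Rd R)) (nu : probability Rd R) : \bar R :=
  ereal_inf [set W2sq m nu | m in D].

Definition value_S (D : set (probability Rd R)) (nu : probability Rd R) : \bar R :=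
  ereal_inf [set cost p | p in
    [set p | exists m, D m /\ is_martingale_coupling m nu p]].

End OT.

(* Main.v *)
Require Import Defs.
From HB Require Import structures.
From mathcomp Require Import all_boot all_order all_algebra.
From mathcomp Require Import all_classical all_reals all_analysis.
From mathcomp Require Import measurable_realfun.
From mathcomp Require Import ring lra.
Import Order.TTheory GRing.Theory Num.Theory.
Local Open Scope classical_set_scope.
Local Open Scope ring_scope.
Section Disint.
Context (R : realType) (d : nat).
Local Notation Rd := (d.-tuple R).
Variable k : R.-pker Rd ~> Rd.

Definition kkf (p : unit * Rd) : set (Rd * Rd) -> \bar R :=
  pushforward (k p.2) (pair p.2).

Let kk0 p : kkf p set0 = 0%E.
Proof. by rewrite /kkf /pushforward preimage_set0 measure0. Qed.

Let kk_ge0 p A : (0 <= kkf p A)%E.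
Proof. exact: measure_ge0. Qed.

Let kk_sigma_additive p : semi_sigma_additive (kkf p).
Proof.
move=> F mF tF mUF; rewrite /kkf /pushforward preimage_bigcup.
have mf := @pair1_measurable _ _ Rd Rd p.2.
apply: measure_semi_sigma_additive.
- by move=> n; rewrite -[X in measurable X]setTI; exact: mf.
- apply/trivIsetP => /= i j _ _ ij; rewrite -preimage_setI.
  by move/trivIsetP : tF => /(_ _ _ _ _ ij) ->//; rewrite preimage_set0.
- by rewrite -preimage_bigcup -[X in measurable X]setTI; exact: mf.
Qed.

HB.instance Definition _ p := isMeasure.Build _ _ _
  (kkf p) (kk0 p) (kk_ge0 p) (@kk_sigma_additive p).

Definition kk : unit * Rd -> {measure set (Rd * Rd) -> \bar R} := kkf.

Let kk_meas U : measurable U ->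
  measurable_fun [set: unit * Rd] (fun p => kk p U : \bar R).
Proof.
move=> mU.
have := measurable_fun_xsection_finite_kernel k (A:=U).
rewrite inE => /(_ mU) h.
rewrite (_ : (fun p => kk p U) = (fun x => k x (xsection U x)) \o snd).
  exact: measurableT_comp h measurable_snd.
by apply/funext => -[a b]; rewrite /kk /kkf /pushforward /= xsectionE.
Qed.

HB.instance Definition _ := isKernel.Build _ _ _ _ _ kk kk_meas.

Let kk_prob p : kk p setT = 1%E.
Proof.
change (k p.2 (pair p.2 @^-1` setT) = 1%E).
by rewrite preimage_setT prob_kernel.
Qed.

HB.instance Definition _ := Kernel_isProbability.Build _ _ _ _ _ kk kk_prob.

Variable mu : probability Rd R.

Let mcstmu : measurable_fun [set: unit] (fun _ : unit => (mu : pprobability Rd R)).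
Proof. exact: measurable_cst. Qed.

Definition ll : unit -> {measure set (d.-tuple R) -> \bar R} := kprobability mcstmu.

Variable pi : probability (Rd * Rd)%type R.
Hypothesis Hdis : disintegrates mu pi k.

Lemma pi_kcomp E : measurable E -> pi E = mkcomp ll kk tt E.
Proof.
apply: (measure_unique [set A `*` B | A in measurable & B in measurable]
  (fun=> setT)).
- exact: measurable_prod_measurableType.
- move=> X Y [X1 mX1 [X2 mX2 <-]] [Y1 mY1 [Y2 mY2 <-]].
  exists (X1 `&` Y1); first exact: measurableI.
  by exists (X2 `&` Y2); [exact: measurableI|rewrite setXI].
- by move=> _; exists setT => //; exists setT => //; rewrite setXTT.
- by rewrite bigcup_const.
- move=> _ [A mA [B mB <-]].
  transitivity (\int[mu]_(x in A) k x B)%E; first exact: Hdis.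
  rewrite integral_mkcond.
  change (\int[mu]_x ((fun x => k x B) \_ A) x =
    \int[mu]_y k y (pair y @^-1` (A `*` B)))%E.
  apply: eq_integral => x _; rewrite patchE.
  case: ifPn => xA.
    congr (k x _); apply/seteqP; split => [y By|y []//].
    by split => //; exact/set_mem.
  rewrite (_ : _ @^-1` _ = set0) ?measure0 //.
  by apply/seteqP; split => [y [/= Ax _]|//]; apply/(negP xA)/mem_set.
- move=> _; rewrite [X in (X < _)%E](_ : _ = 1%E) ?ltry //.
  exact: (probability_setT pi).
Qed.

Lemma disint_integral (f : (Rd * Rd)%type -> \bar R) :
  (forall z, 0 <= f z)%E -> measurable_fun setT f ->
  (\int[pi]_z f z = \int[mu]_x \int[k x]_y f (x, y))%E.
Proof.
move=> f0 mf.
rewrite (eq_measure_integral (mkcomp ll kk tt)); last first.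
  by move=> A mA _; exact: pi_kcomp.
rewrite /mkcomp integral_kcomp //.
change (\int[mu]_y \int[pushforward (k y) (pair y)]_z f z =
  \int[mu]_x \int[k x]_y f (x, y))%E.
apply: eq_integral => y _.
by rewrite (ge0_integral_pushforward (pair1_measurable y)) // preimage_setT.
Qed.

End Disint.
Section OneD.
Context (R : realType) (dT : measure_display) (T : measurableType dT)
  (P : {measure set T -> \bar R}) (P1 : P setT = 1%E).

Lemma int_cst (c : R) : P.-integrable setT (EFin \o cst c).
Proof.
apply/integrableP; split; first exact/measurable_EFinP/measurable_cst.
rewrite (_ : (fun x => _) = cst `|c|%:E); last by apply/funext.
rewrite integral_cst //= P1 mule1; exact: ltry.
Qed.

Lemma norm_le_sq (t : R) : `|t| <= 1 + t ^+ 2.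
Proof.
have h0 := normr_ge0 t.
rewrite -[t ^+ 2]real_normK ?num_real //.
set u := `|t| in h0 *; nra.
Qed.

Lemma integrable_of_sq (g : T -> R) (mg : measurable_fun setT g) (a : R) :
  (\int[P]_y ((a - g y) ^+ 2)%:E < +oo)%E -> P.-integrable setT (EFin \o g).
Proof.
move=> fin.
have mF : measurable_fun setT (fun y => (a - g y) ^+ 2).
  by apply: measurable_funX; apply: measurable_funB.
have iF : P.-integrable setT (fun y => ((a - g y) ^+ 2)%:E).
  apply/integrableP; split; first exact/measurable_EFinP.
  under eq_integral do rewrite gee0_abs ?lee_fin ?sqr_ge0//.
  exact: fin.
have iC : P.-integrable setT (EFin \o cst (`|a| + 1)).
  exact: int_cst.
apply: (le_integrable _ _ _ (integrableD _ iC iF)) => //.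
  exact/measurable_EFinP.
move=> x _ /=; rewrite lee_fin.
have h1 := norm_le_sq (a - g x).
have h2 : `|g x| <= `|a| + `|a - g x|.
  by rewrite -[X in `|X|](subKr a (g x)) (le_trans (ler_normB _ _)).
have h3 : 0 <= `|a| + 1 + (a - g x) ^+ 2 by rewrite addr_ge0 ?sqr_ge0 ?addr_ge0.
rewrite (ger0_norm h3); lra.
Qed.

Lemma var_le (g : T -> R) (mg : measurable_fun setT g) (a : R) :
  (\int[P]_y ((fine (\int[P]_z (g z)%:E) - g y) ^+ 2)%:E <=
   \int[P]_y ((a - g y) ^+ 2)%:E)%E.
Proof.
set m := fine _.
have [->|Hne] := eqVneq (\int[P]_y ((a - g y) ^+ 2)%:E)%E +oo%E.
  exact: leey.
have fin : (\int[P]_y ((a - g y) ^+ 2)%:E < +oo)%E.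
  by rewrite lt_neqAle Hne leey.
have ig := integrable_of_sq g mg a fin.
have mE : (\int[P]_z (g z)%:E)%E = m%:E.
  by rewrite fineK // integrable_fin_num.
have mF : measurable_fun setT (fun y => (a - g y) ^+ 2).
  by apply: measurable_funX; apply: measurable_funB.
have iF : P.-integrable setT (EFin \o (fun y => (a - g y) ^+ 2)).
  apply/integrableP; split; first exact/measurable_EFinP.
  rewrite (_ : (fun x => _) = (fun y => ((a - g y) ^+ 2)%:E)) //.
  by apply/funext => y /=; rewrite ger0_norm // sqr_ge0.
have iG : P.-integrable setT (EFin \o (fun y => m - g y)).
  have -> : EFin \o (fun y => m - g y) = (fun y => (EFin \o cst m) y - (EFin \o g) y)%E.
    by apply/funext => y.
  apply: integrableB => //; exact: int_cst.
have iH : P.-integrable setT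
    (EFin \o (fun y => 2 * (a - m) * (m - g y) + (a - m) ^+ 2)).
  have -> : EFin \o (fun y => 2 * (a - m) * (m - g y) + (a - m) ^+ 2) =
    (fun y => (2 * (a - m))%R%:E * (EFin \o (fun y => (m - g y)%R)) y +
              (EFin \o cst ((a - m) ^+ 2)%R) y)%E.
    by apply/funext => y /=; rewrite -EFinM -EFinD.
  apply: integrableD => //; first exact: integrableZl.
  exact: int_cst.
have -> : (\int[P]_y ((m - g y) ^+ 2)%:E =
    \int[P]_y (((a - g y) ^+ 2)%:E -
      (2 * (a - m) * (m - g y) + (a - m) ^+ 2)%:E))%E.
  by apply: eq_integral => y _; rewrite -EFinB; congr EFin; ring.
rewrite integralB_EFin //.
have -> : (\int[P]_y (2 * (a - m) * (m - g y) + (a - m) ^+ 2)%:E =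
    ((a - m) ^+ 2)%:E)%E.
  rewrite (_ : (fun y => _) = (fun y => (2 * (a - m))%R%:E * ((m - g y)%R)%:E +
              (EFin \o cst ((a - m) ^+ 2)%R) y)%E); last first.
    by apply/funext => y /=; rewrite -EFinM -EFinD.
  rewrite integralD //; last exact: int_cst.
    rewrite integralZl //.
    rewrite (_ : (fun y => (m - g y)%:E) = (fun y => (EFin \o cst m) y - (EFin \o g) y)%E); last first.
      by apply/funext.
    rewrite integralB //; last exact: int_cst.
    rewrite mE /= integral_cst // P1 mule1 -EFinD subrr mule0 add0e.
    by rewrite integral_cst // P1 mule1.
    exact: integrableZl.
rewrite -(fineK (integrable_fin_num _ iF)) //= -EFinB lee_fin.
have := sqr_ge0 (a - m); lra.
Qed.

End OneD.
Section Main.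
Context (R : realType) (d : nat).
Local Notation Rd := (d.-tuple R).
Variable k : R.-pker Rd ~> Rd.

Lemma measurable_tnthE (i : 'I_d) : measurable_fun [set: Rd] (fun y : Rd => tnth y i).
Proof. exact: measurable_tnth. Qed.

Lemma measurable_bary : measurable_fun [set: Rd] (bary k).
Proof.
apply/measurable_fun_tnthP => i.
rewrite (_ : _ \o _ = fun x => fine (\int[k x]_y (tnth y i)%:E)); last first.
  by apply/funext => x; rewrite /= /bary tnth_mktuple.
apply: (measurableT_comp (fine_measurable _)) => //.
under eq_fun do rewrite integralE.
apply: emeasurable_funB.
- apply: (measurable_fun_integral_kernel (l := k)).
  + by move=> U mU; exact: measurable_kernel.
  + by move=> y; exact: funepos_ge0.
  + apply: measurable_funepos; apply/measurable_EFinP; exact: measurable_tnth.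
- apply: (measurable_fun_integral_kernel (l := k)).
  + by move=> U mU; exact: measurable_kernel.
  + by move=> y; exact: funeneg_ge0.
  + apply: measurable_funeneg; apply/measurable_EFinP; exact: measurable_tnth.
Qed.

Lemma measurable_sqdist (f g : (Rd * Rd)%type -> Rd) :
  measurable_fun setT f -> measurable_fun setT g ->
  measurable_fun setT (fun z => (sqdist (f z) (g z))%:E).
Proof.
move=> mf mg; apply/measurable_EFinP; rewrite /sqdist.
apply: measurable_sum => i; apply: measurable_funX; apply: measurable_funB.
  exact: (measurableT_comp (measurable_tnth i) mf).
exact: (measurableT_comp (measurable_tnth i) mg).
Qed.

Lemma pointwise_le x :
  (\int[k x]_y (sqdist (bary k x) y)%:E <= \int[k x]_y (sqdist x y)%:E)%E.
Proof.
rewrite /sqdist.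
under eq_integral do rewrite -sumEFin.
under [X in (_ <= X)%E]eq_integral do rewrite -sumEFin.
rewrite !ge0_integral_sum //; first last.
- by move=> i y _; rewrite lee_fin sqr_ge0.
- move=> i; apply/measurable_EFinP; apply: measurable_funX.
  by apply: measurable_funB => //; exact: measurable_tnth.
- by move=> i y _; rewrite lee_fin sqr_ge0.
- move=> i; apply/measurable_EFinP; apply: measurable_funX.
  by apply: measurable_funB => //; exact: measurable_tnth.
apply: lee_sum => i _.
rewrite /bary tnth_mktuple /Rintegral.
exact: (@var_le _ _ _ (k x) (@prob_kernel _ _ _ _ _ k x) (fun y => tnth y i) (measurable_tnth i) (tnth x i)).
Qed.


Variables (nu mu mu' : probability Rd R) (pi : probability (Rd * Rd)%type R).
Hypotheses (P2nu : P2 nu) (Hcoup : is_coupling mu nu pi) (Hdis : disintegrates mu pi k).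
Hypothesis Hmu' : forall A, measurable A -> mu' A = pushforward mu (bary k) A.

Definition Cf (z : (Rd * Rd)%type) : (Rd * Rd)%type := (bary k z.1, z.2).

Lemma mC : measurable_fun setT Cf.
Proof.
apply: measurable_fun_pair => //.
exact: (measurableT_comp measurable_bary measurable_fst).
Qed.

Definition Cm : {mfun (Rd * Rd)%type >-> (Rd * Rd)%type} :=
  HB.pack Cf (isMeasurableFun.Build _ _ _ _ Cf mC).

Definition pi' : probability (Rd * Rd)%type R := distribution pi Cm.

Lemma pi'E A : measurable A ->
  pi' A = pushforward pi (fun z => (bary k z.1, z.2)) A.
Proof. by []. Qed.

Lemma coupling' : is_coupling mu' nu pi'.
Proof.
move=> A mA; split.
  have mB : measurable (bary k @^-1` A).
    by rewrite -[X in measurable X]setTI; exact: measurable_bary.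
  rewrite Hmu' //; exact: (Hcoup _ mB).1.
exact: (Hcoup A mA).2.
Qed.

Lemma cost_le : (cost pi' <= cost pi)%E.
Proof.
rewrite /cost.
have -> : (\int[pi']_z (sqdist z.1 z.2)%:E =
    \int[pi]_z (sqdist (bary k z.1) z.2)%:E)%E.
  have := @ge0_integral_pushforward _ _ _ _ _ Cf mC pi setT
    (fun z => (sqdist z.1 z.2)%:E) measurableT
    (measurable_sqdist _ _ measurable_fst measurable_snd).
  rewrite preimage_setT; apply.
  by move=> z _; rewrite lee_fin /sqdist sumr_ge0 // => i _; exact: sqr_ge0.
rewrite (@disint_integral _ _ k mu pi Hdis (fun z => (sqdist (bary k z.1) z.2)%:E)).
- rewrite (@disint_integral _ _ k mu pi Hdis (fun z => (sqdist z.1 z.2)%:E)).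
  + apply: ge0_le_integral => //.
    * by move=> x _; apply: integral_ge0 => y _;
        rewrite lee_fin /sqdist sumr_ge0 // => i _; exact: sqr_ge0.
    * apply: (measurable_kfcomp k (f := fun z => (sqdist (bary k z.1) z.2)%:E)).
        exact: (measurable_sqdist _ _ (measurableT_comp measurable_bary measurable_fst) measurable_snd).
      by move=> z; rewrite lee_fin /sqdist sumr_ge0 // => i _; exact: sqr_ge0.
    * apply: (measurable_kfcomp k (f := fun z => (sqdist z.1 z.2)%:E)).
        exact: (measurable_sqdist _ _ measurable_fst measurable_snd).
      by move=> z; rewrite lee_fin /sqdist sumr_ge0 // => i _; exact: sqr_ge0.
    * by move=> x _; exact: pointwise_le.
  + by move=> z; rewrite lee_fin /sqdist sumr_ge0 // => i _; exact: sqr_ge0.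
  + exact: (measurable_sqdist _ _ measurable_fst measurable_snd).
- by move=> z; rewrite lee_fin /sqdist sumr_ge0 // => i _; exact: sqr_ge0.
- exact: (measurable_sqdist _ _ (measurableT_comp measurable_bary measurable_fst) measurable_snd).
Qed.


Lemma funepos_le_abs (T : Type) (f : T -> \bar R) x : (f^\+ x <= `|f x|)%E.
Proof. by rewrite funeposE ge_max lee_abs abse_ge0. Qed.

Lemma funeneg_le_abs (T : Type) (f : T -> \bar R) x : (f^\- x <= `|f x|)%E.
Proof. by rewrite funenegE ge_max -abseN lee_abs abse_ge0. Qed.

Definition sndm : {mfun (Rd * Rd)%type >-> Rd} :=
  HB.pack (@snd Rd Rd) (isMeasurableFun.Build _ _ _ _ (@snd Rd Rd) measurable_snd).

Lemma int_snd (h : Rd -> \bar R) : (forall y, 0 <= h y)%E -> measurable_fun setT h ->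
  (\int[pi]_z h z.2 = \int[nu]_y h y)%E.
Proof.
move=> h0 mh.
rewrite [RHS](eq_measure_integral (distribution pi sndm)); last first.
  by move=> A mA _; symmetry; exact: (Hcoup A mA).2.
have := @ge0_integral_pushforward _ _ _ _ _ snd measurable_snd pi setT h measurableT mh.
rewrite preimage_setT => ->; last by move=> y _; exact: h0.
by [].
Qed.

Lemma sq_le_sqnorm (y : Rd) (i : 'I_d) : tnth y i ^+ 2 <= sqnorm y.
Proof.
rewrite /sqnorm (bigD1 i) //= lerDl sumr_ge0 // => j _; exact: sqr_ge0.
Qed.

Lemma measurable_sqnorm : measurable_fun [set: Rd] (fun y => (sqnorm y)%:E).
Proof.
apply/measurable_EFinP; apply: measurable_sum => i; apply: measurable_funX.
exact: measurable_tnth.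
Qed.

Lemma iy_lt (i : 'I_d) : (\int[pi]_z `|(tnth z.2 i)%:E| < +oo)%E.
Proof.
rewrite (int_snd (fun y => `|(tnth y i)%:E|%E)) //; last first.
  change (measurable_fun setT (abse \o (fun y : Rd => (tnth y i)%:E))).
  apply: (measurableT_comp (@abse_measurable R setT)); apply/measurable_EFinP; exact: measurable_tnth.
apply: (@le_lt_trans _ _ (\int[nu]_y ((1%:E : \bar R) + (sqnorm y)%:E))%E).
  apply: ge0_le_integral => //.
  - change (measurable_fun setT (abse \o (fun y : Rd => (tnth y i)%:E))).
  apply: (measurableT_comp (@abse_measurable R setT)); apply/measurable_EFinP; exact: measurable_tnth.
  - by apply: emeasurable_funD => //; exact: measurable_sqnorm.
  - move=> y _ /=; rewrite -EFinD lee_fin.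
    have := norm_le_sq _ (tnth y i); have := sq_le_sqnorm y i; lra.
rewrite ge0_integralD //; first last.
- exact: measurable_sqnorm.
- by move=> y _; rewrite lee_fin /sqnorm sumr_ge0 // => j _; exact: sqr_ge0.
apply: lte_add_pinfty; last exact: P2nu.
rewrite integral_cst // [X in (_ * X)%E](_ : _ = 1%E) ?mule1 ?ltry //.
exact: probability_setT.
Qed.


Lemma H0 (F : (Rd * Rd)%type -> \bar R) (B : set Rd) :
  (forall z, 0 <= F z)%E -> measurable_fun setT F -> measurable B ->
  (\int[pi]_(z in B `*` setT) F z = \int[mu]_(x in B) \int[k x]_y F (x, y))%E.
Proof.
move=> F0 mF mB.
have mBT : measurable (B `*` [set: Rd]) by exact: measurableX.
rewrite integral_mkcond (@disint_integral _ _ k mu pi Hdis).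
- rewrite [RHS]integral_mkcond; apply: eq_integral => x _.
  rewrite patchE; case: ifPn => xB.
    apply: eq_integral => y _; rewrite patchE mem_set //.
    by split => //; exact/set_mem.
  apply: integral0_eq => y _; rewrite patchE ifN //.
  by apply/negP => /set_mem [/= Bx _]; apply/(negP xB)/mem_set.
- by move=> z; rewrite patchE; case: ifP.
- rewrite (_ : F \_ _ = (fun z => (\1_B z.1)%:E * F z)%E); last first.
    apply/funext => -[x y]; rewrite patchE indicE /=.
    have -> : ((x, y) \in B `*` [set: Rd]) = (x \in B).
      apply/idP/idP => [/set_mem [/= Bx _]|/set_mem Bx]; apply/mem_set => //.
    by case: (x \in B); rewrite ?mul1e ?mul0e.
  apply: emeasurable_funM => //; apply/measurable_EFinP.
  apply: measurableT_comp => //; exact: measurable_indic.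
Qed.


Lemma mB A : measurable A -> measurable (bary k @^-1` A).
Proof. by move=> mA; rewrite -[X in measurable X]setTI; exact: measurable_bary. Qed.

Lemma push' (G : (Rd * Rd)%type -> \bar R) (A : set Rd) : measurable A ->
  (forall z, 0 <= G z)%E -> measurable_fun setT G ->
  (\int[pi']_(z in A `*` setT) G z =
   \int[pi]_(z in (bary k @^-1` A) `*` setT) G (Cf z))%E.
Proof.
move=> mA G0 mG.
have mAT : measurable (A `*` [set: Rd]) by exact: measurableX.
have h := @ge0_integral_pushforward _ _ _ _ _ Cf mC pi (A `*` setT) G mAT
  (measurable_funTS mG) (fun z _ => G0 z).
exact h.
Qed.


Lemma mart (i : 'I_d) (A : set Rd) : measurable A ->
  (\int[pi']_(z in A `*` setT) (tnth z.2 i)%:E =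
   \int[pi']_(z in A `*` setT) (tnth z.1 i)%:E)%E.
Proof.
move=> mA.
have mBB := mB A mA.
set B := bary k @^-1` A in mBB *.
pose f := fun y : Rd => (tnth y i)%:E.
pose g := fun x : Rd => (tnth (bary k x) i)%:E.
have mf : measurable_fun setT f by apply/measurable_EFinP; exact: measurable_tnth.
have mg : measurable_fun setT g.
  apply/measurable_EFinP; exact: (measurableT_comp (measurable_tnth i) measurable_bary).
pose Pp := (fun x => \int[k x]_y f^\+ y)%E.
pose Nn := (fun x => \int[k x]_y f^\- y)%E.
have mPp : measurable_fun setT Pp.
  apply: (measurable_fun_integral_kernel (l := k)).
  + by move=> U mU; exact: measurable_kernel.
  + by move=> y; exact: funepos_ge0.
  + exact: measurable_funepos.
have mNn : measurable_fun setT Nn.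
  apply: (measurable_fun_integral_kernel (l := k)).
  + by move=> U mU; exact: measurable_kernel.
  + by move=> y; exact: funeneg_ge0.
  + exact: measurable_funeneg.
have mf2 : measurable_fun setT (fun z : (Rd * Rd)%type => (tnth z.2 i)%:E).
  apply/measurable_EFinP; exact: (measurableT_comp (measurable_tnth i) measurable_snd).
have mf1 : measurable_fun setT (fun z : (Rd * Rd)%type => (tnth z.1 i)%:E).
  apply/measurable_EFinP; exact: (measurableT_comp (measurable_tnth i) measurable_fst).
have LP : (\int[pi']_(z in A `*` setT) (fun z => (tnth z.2 i)%:E)^\+ z =
    \int[mu]_(x in B) Pp x)%E.
  rewrite push' //; last exact: measurable_funepos.
  rewrite H0; [|by move=> z; exact: funepos_ge0|exact: (measurableT_comp (measurable_funepos mf2) mC)|exact: mBB].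
  apply: eq_integral => x _; apply: eq_integral => y _.
  by rewrite !funeposE.
have LN : (\int[pi']_(z in A `*` setT) (fun z => (tnth z.2 i)%:E)^\- z =
    \int[mu]_(x in B) Nn x)%E.
  rewrite push' //; last exact: measurable_funeneg.
  rewrite H0; [|by move=> z; exact: funeneg_ge0|exact: (measurableT_comp (measurable_funeneg mf2) mC)|exact: mBB].
  apply: eq_integral => x _; apply: eq_integral => y _.
  by rewrite !funenegE.
have RP : (\int[pi']_(z in A `*` setT) (fun z => (tnth z.1 i)%:E)^\+ z =
    \int[mu]_(x in B) g^\+ x)%E.
  rewrite push' //; last exact: measurable_funepos.
  rewrite H0; [|by move=> z; exact: funepos_ge0|exact: (measurableT_comp (measurable_funepos mf1) mC)|exact: mBB].
  apply: eq_integral => x _.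
  rewrite (eq_integral (fun=> (g^\+ x)%E)); last by move=> y _; rewrite !funeposE.
  by rewrite integral_cst // prob_kernel mule1.
have RN : (\int[pi']_(z in A `*` setT) (fun z => (tnth z.1 i)%:E)^\- z =
    \int[mu]_(x in B) g^\- x)%E.
  rewrite push' //; last exact: measurable_funeneg.
  rewrite H0; [|by move=> z; exact: funeneg_ge0|exact: (measurableT_comp (measurable_funeneg mf1) mC)|exact: mBB].
  apply: eq_integral => x _.
  rewrite (eq_integral (fun=> (g^\- x)%E)); last by move=> y _; rewrite !funenegE.
  by rewrite integral_cst // prob_kernel mule1.
rewrite integralE [RHS]integralE LP LN RP RN -(integralE mu B g).
have iPp : mu.-integrable setT Pp.
  apply/integrableP; split; first exact: mPp.
  rewrite (_ : (fun x => `|Pp x|)%E = Pp); last first.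
    apply/funext => x; rewrite gee0_abs //; apply: integral_ge0 => y _.
    exact: funepos_ge0.
  have -> : (\int[mu]_x Pp x = \int[pi]_z f^\+ z.2)%E.
    rewrite (@disint_integral _ _ k mu pi Hdis (fun z => (f^\+ z.2)%E)) //.
    exact: (measurableT_comp (measurable_funepos mf) measurable_snd).
  apply: le_lt_trans (iy_lt i).
  apply: ge0_le_integral => //.
  - exact: (measurableT_comp (measurable_funepos mf) measurable_snd).
  - change (measurable_fun setT (abse \o (fun z : (Rd * Rd)%type => (tnth z.2 i)%:E))).
    exact: (measurableT_comp (@abse_measurable R setT) mf2).
  - by move=> z _; exact: funepos_le_abs.
have iNn : mu.-integrable setT Nn.
  apply/integrableP; split; first exact: mNn.
  rewrite (_ : (fun x => `|Nn x|)%E = Nn); last first.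
    apply/funext => x; rewrite gee0_abs //; apply: integral_ge0 => y _.
    exact: funeneg_ge0.
  have -> : (\int[mu]_x Nn x = \int[pi]_z f^\- z.2)%E.
    rewrite (@disint_integral _ _ k mu pi Hdis (fun z => (f^\- z.2)%E)) //.
    exact: (measurableT_comp (measurable_funeneg mf) measurable_snd).
  apply: le_lt_trans (iy_lt i).
  apply: ge0_le_integral => //.
  - exact: (measurableT_comp (measurable_funeneg mf) measurable_snd).
  - change (measurable_fun setT (abse \o (fun z : (Rd * Rd)%type => (tnth z.2 i)%:E))).
    exact: (measurableT_comp (@abse_measurable R setT) mf2).
  - by move=> z _; exact: funeneg_le_abs.
have iPpB := integrableS measurableT mBB (@subsetT _ _) iPp.
have iNnB := integrableS measurableT mBB (@subsetT _ _) iNn.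
rewrite -integralB //.
apply: ae_eq_integral => //.
- exact: measurable_funTS (emeasurable_funB mPp mNn).
- exact: measurable_funTS mg.
- apply: filterS2 (integrable_ae measurableT iPp) (integrable_ae measurableT iNn).
  move=> x hP hN Bx.
  have fP := hP Logic.I; have fN := hN Logic.I.
  rewrite /g /bary tnth_mktuple /Rintegral integralE fineK //.
  by rewrite fin_numB fP fN.
Qed.


Lemma ipi' (i : 'I_d) : pi'.-integrable setT (fun z : (Rd * Rd)%type => (tnth z.2 i)%:E).
Proof.
have mf2 : measurable_fun setT (fun z : (Rd * Rd)%type => (tnth z.2 i)%:E).
  apply/measurable_EFinP; exact: (measurableT_comp (measurable_tnth i) measurable_snd).
have mab : measurable_fun setT (fun z : (Rd * Rd)%type => `|(tnth z.2 i)%:E|%E).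
  change (measurable_fun setT (abse \o (fun z : (Rd * Rd)%type => (tnth z.2 i)%:E))).
  exact: (measurableT_comp (@abse_measurable R setT) mf2).
apply/integrableP; split; first exact: mf2.
have h := @ge0_integral_pushforward _ _ _ _ _ Cf mC pi setT
  (fun z : (Rd * Rd)%type => `|(tnth z.2 i)%:E|%E) measurableT mab (fun z _ => abse_ge0 _).
rewrite preimage_setT in h.
have -> : (\int[pi']_z `|(tnth z.2 i)%:E| = \int[pi]_z `|(tnth z.2 i)%:E|)%E by exact h.
exact: iy_lt.
Qed.

Lemma martingale' : is_martingale_coupling mu' nu pi'.
Proof.
split; first exact: coupling'.
move=> i; split; first exact: ipi'.
by move=> A mA; exact: mart.
Qed.

End Main.


Theorem mainTheorem1 (R : realType) (d : nat)
  (nu : probability (d.-tuple R) R) (D : set (probability (d.-tuple R) R)) :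
  P2 nu -> D `<=` @P2 R d ->
  forall (mu : probability (d.-tuple R) R)
         (pi : probability (d.-tuple R * d.-tuple R)%type R)
         (k : R.-pker (d.-tuple R) ~> (d.-tuple R)),
  (* mu is a minimizer of (R) *)
  D mu -> (forall m : probability (d.-tuple R) R, D m -> (W2sq mu nu <= W2sq m nu)%E) ->
  (* pi is an optimal coupling for W_2^2(mu, nu), disintegrated as mu (x) k *)
  is_coupling mu nu pi -> cost pi = W2sq mu nu ->
  disintegrates mu pi k ->
  (* mu' = (c_pi)_# mu belongs to D *)
  forall mu' : probability (d.-tuple R) R,
  (forall A, measurable A -> mu' A = pushforward mu (bary k) A) ->
  D mu' ->
  [/\ (* (c_pi)_# mu is optimal for (R) *)
      (forall m : probability (d.-tuple R) R, D m -> (W2sq mu' nu <= W2sq m nu)%E),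
      (* (C_pi)_# pi is a martingale coupling of mu', nu optimal for (S) *)
      (exists pi' : probability (d.-tuple R * d.-tuple R)%type R,
         (forall A, measurable A ->
            pi' A = pushforward pi (fun z => (bary k z.1, z.2)) A) /\
         is_martingale_coupling mu' nu pi' /\
         (forall (m : probability (d.-tuple R) R) p, D m -> is_martingale_coupling m nu p ->
            (cost pi' <= cost p)%E))
    & value_R D nu = value_S D nu].
Proof.
move=> P2nu DP2 mu pi k Dmu minmu Hcoup Hcost Hdis mu' Hmu' Dmu'.
have cle : (cost (pi' R d k pi) <= W2sq mu nu)%E.
  by rewrite -Hcost; exact: (@cost_le _ _ k mu pi Hdis).
have coup' := @coupling' _ _ k nu mu mu' pi Hcoup Hmu'.
have mart' := @martingale' _ _ k nu mu mu' pi P2nu Hcoup Hdis Hmu'.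
have W2le : (W2sq mu' nu <= cost (pi' R d k pi))%E.
  by apply: ereal_inf_lbound; exists (pi' R d k pi).
have costp : forall m p, D m -> is_martingale_coupling m nu p ->
    (W2sq mu nu <= cost p)%E.
  move=> m p Dm [cp _]; apply: (le_trans (minmu m Dm)).
  by apply: ereal_inf_lbound; exists p.
have vR : value_R D nu = W2sq mu nu.
  apply/le_anti/andP; split.
    by apply: ereal_inf_lbound; exists mu.
  by apply/ereal_infP => _ [m Dm <-]; exact: minmu.
have vS : value_S D nu = W2sq mu nu.
  apply/le_anti/andP; split.
    apply: (le_trans _ cle); apply: ereal_inf_lbound.
    by exists (pi' R d k pi) => //; exists mu'.
  by apply/ereal_infP => _ [p [m [Dm mp]] <-]; exact: (costp m p Dm mp).
split.
- move=> m Dm; apply: (le_trans W2le); apply: (le_trans cle); exact: minmu.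
- exists (pi' R d k pi); split; first exact: (@pi'E _ _ k pi).
  split; first exact: mart'.
  by move=> m p Dm mp; apply: (le_trans cle); exact: (costp m p Dm mp).
- by rewrite vR vS.
Qed.
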